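(* Consider the control-affine system described in the context, with safe set $\mathcal{C}=\{x\in\mathbb{R}^{m+n}: h(x)\geq 0\}$. Suppose that: (i) Assumptions A, B and C (see context) hold; (ii) there exist positive constants $\gamma,\epsilon_1,\epsilon_2>0$ and $\gamma^\theta_i,\gamma^\lambda_i>0$, $i\in[n]$, such that for every $x\in\mathcal{C}$ the set $$K_{BF}(x)=\{\mathfrak{u}\in\mathbb{R}^n : \Psi_0(x)+\Psi_1(x)\mathfrak{u}\geq 0\}$$ is non-empty, where $$\Psi_0(x)=\mathcal{M}(x)+\sum_{i=1}^n h_{x_2,i}(x)\,\theta_i^{0\top}\varphi_i(x)-n(\epsilon_1+\epsilon_2)+\gamma\Big[h(x)-\sum_{i=1}^n\Big(\frac{\bar\mu_i^2}{2\gamma_i^\theta}+\frac{\bar\nu_i^2}{2\gamma_i^\lambda}\Big)\Big],$$ $$\Psi_1(x)=\big[h_{x_2,1}^2(g_1+\lambda_1^{0\top}\psi_1),\ h_{x_2,2}^2(g_2+\lambda_2^{0\top}\psi_2),\ \dots,\ h_{x_2,n}^2(g_n+\lambda_n^{0\top}\psi_n)\big]\in\mathbb{R}^{1\times n}$$ (all functions evaluated at $x$); (iii) for each $i\in[n]$, the scalar estimates $\hat\mu_i,\hat\nu_i$ evolve according to $$\dot{\hat\mu}_i=-\gamma\hat\mu_i+\gamma_i^\theta|h_{x_2,i}|\,\|\varphi_i\|,\qquad \dot{\hat\nu}_i=-\gamma\hat\nu_i+\gamma_i^\lambda h_{x_2,i}^2|u_{0,i}|\,\|\psi_i\|,$$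 with $\hat\mu_i(0)>0$, $\hat\nu_i(0)>0$, where $u_0=[u_{0,1},\dots,u_{0,n}]^\top$ is a Lipschitz function satisfying $u_0\in K_{BF}(x)$; (iv) $h(x(0))\geq \sum_{i=1}^n\Big(\frac{\hat\mu_i(0)^2+\bar\mu_i^2}{2\gamma_i^\theta}+\frac{\hat\nu_i(0)^2+\bar\nu_i^2}{2\gamma_i^\lambda}\Big)$. Then the control input $u=h_{x_2}^\top\odot s(u_0)\in\mathbb{R}^n$, where $s(u_0)=[s_1(u_{0,1}),\dots,s_n(u_{0,n})]^\top$ with $$s_i(u_{0,i})=u_{0,i}+\frac{\kappa_{1,i}}{b_i}+\frac{\kappa_{2,i}^2u_{0,i}^2}{b_i(\kappa_{2,i}|h_{x_2,i}||u_{0,i}|+\epsilon_2)},\quad \kappa_{1,i}=\frac{\hat\mu_i^2\|\varphi_i\|^2}{\hat\mu_i\|\varphi_i\||h_{x_2,i}|+\epsilon_1},\quad \kappa_{2,i}=\hat\nu_i\|\psi_i\||h_{x_2,i}|,$$ ensures $h(x(t))\geq 0$ for all $t>0$ along the closed-loop trajectory.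
   Context: Let $m\ge 0$, $n\ge 1$ be integers, $[n]=\{1,\dots,n\}$. The state is $x=(x_1,x_2)\in\mathbb{R}^{m+n}$, $x_1\in\mathbb{R}^m$, $x_2\in\mathbb{R}^n$, the input $u\in\mathbb{R}^n$, and the system is $$\dot x=f(x)+f_u(x)+\begin{pmatrix}0_m\\ f_\theta(x)\end{pmatrix}+\begin{pmatrix}0_{m\times n}\\ g(x)+g_\lambda(x)\end{pmatrix}u,$$ where $f:\mathbb{R}^{m+n}\to\mathbb{R}^{m+n}$ is a known Lipschitz function, $f_u:\mathbb{R}^{m+n}\to\mathbb{R}^{m+n}$ is an unknown Lipschitz function, $f_\theta(x)=[\theta_1^\top\varphi_1(x),\dots,\theta_n^\top\varphi_n(x)]^\top$, $g(x)=\mathrm{diag}(g_1(x),\dots,g_n(x))$, $g_\lambda(x)=\mathrm{diag}(\lambda_1^\top\psi_1(x),\dots,\lambda_n^\top\psi_n(x))$, with known functions $g_i:\mathbb{R}^{m+n}\to\mathbb{R}$, $\varphi_i:\mathbb{R}^{m+n}\to\mathbb{R}^{p_i}$, $\psi_i:\mathbb{R}^{m+n}\to\mathbb{R}^{q_i}$, and unknown constant parameter vectors $\theta_i\in\mathbb{R}^{p_i}$, $\lambda_i\in\mathbb{R}^{q_i}$. The function $h:\mathbb{R}^{m+n}\to\mathbb{R}$ is continuously differentiable; $h_x=\partial h/\partial x\in\mathbb{R}^{1\times(m+n)}$ and $h_{x_2}=\partial h/\partial x_2\in\mathbb{R}^{1\times n}$ are row vectors with entries $h_{x,j}$, $h_{x_2,i}$.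 Norms are Euclidean; $\odot$ is the entrywise (Hadamard) product; vector inequalities are entrywise. Assumption A: there are known functions $\underline f_u,\overline f_u:\mathbb{R}^{m+n}\to\mathbb{R}^{m+n}$ with $\underline f_u(x)\le f_u(x)\le\overline f_u(x)$ for all $x$; write $\underline f_{u,j},\overline f_{u,j}$ for their entries. Assumption B: for each $i\in[n]$ there are known vectors with $\underline\theta_i\le\theta_i\le\overline\theta_i$ and $\underline\lambda_i\le\lambda_i\le\overline\lambda_i$. Assumption C: for each $i\in[n]$ there is a constant $b_i>0$ such that $g_i(x)+\lambda_i^\top\psi_i(x)\geq b_i$ for all $x\in\mathcal{C}$. Fix nominal values $\theta_i^0,\lambda_i^0$ with $\underline\theta_i\le\theta_i^0\le\overline\theta_i$, $\underline\lambda_i\le\lambda_i^0\le\overline\lambda_i$, and set $\bar\mu_i=\sqrt{\sum_{j=1}^{p_i}\max\{((\overline\theta_i)_j-(\theta_i^0)_j)^2,((\underline\theta_i)_j-(\theta_i^0)_j)^2\}}$, $\bar\nu_i=\sqrt{\sum_{j=1}^{q_i}\max\{((\overline\lambda_i)_j-(\lambda_i^0)_j)^2,((\underline\lambda_i)_j-(\lambda_i^0)_j)^2\}}$ (so that $\|\theta_i-\theta_i^0\|\le\bar\mu_i$, $\|\lambda_i-\lambda_i^0\|\le\bar\nu_i$). Define $\mathcal{M}(x)=h_x(x)f(x)+\sum_{j=1}^{m+n}\min\{h_{x,j}(x)\underline f_{u,j}(x),\,h_{x,j}(x)\overline f_{u,j}(x)\}$. *)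

(* Defs.v *)
From HB Require Import structures.
From mathcomp Require Import all_boot all_order all_algebra.
From mathcomp Require Import all_classical all_reals all_analysis.
Set Implicit Arguments. Unset Strict Implicit. Unset Printing Implicit Defensive.
Import Order.TTheory GRing.Theory Num.Theory.
Import numFieldNormedType.Exports.
Local Open Scope ring_scope.
Local Open Scope classical_set_scope.

Definition dotv (R : realType) (k : nat) (a b : 'I_k -> R) : R :=
  \sum_(j < k) a j * b j.
Definition enorm (R : realType) (k : nat) (a : 'I_k -> R) : R :=
  Num.sqrt (\sum_(j < k) a j ^+ 2).

Definition partial (R : realType) (N : nat) (h : 'rV[R]_N -> R)
  (x : 'rV[R]_N) (j : 'I_N) : R := 'D_(delta_mx 0 j) h x.

Definition hx2 (R : realType) (m n : nat) (h : 'rV[R]_(m + n) -> R)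
  (x : 'rV[R]_(m + n)) (i : 'I_n) : R := partial h x (rshift m i).

(* \bar mu_i and \bar nu_i from the parameter box and nominal value *)
Definition bound_rad (R : realType) (k : nat) (lo hi nom : 'I_k -> R) : R :=
  Num.sqrt (\sum_(j < k) Num.max ((hi j - nom j) ^+ 2) ((lo j - nom j) ^+ 2)).

Definition Mfun (R : realType) (N : nat) (h : 'rV[R]_N -> R)
  (f fulo fuhi : 'rV[R]_N -> 'rV[R]_N) (x : 'rV[R]_N) : R :=
  \sum_(j < N) partial h x j * f x 0 j
  + \sum_(j < N) Num.min (partial h x j * fulo x 0 j) (partial h x j * fuhi x 0 j).

Definition sys_rhs (R : realType) (m n : nat) (p q : 'I_n -> nat)
  (f fu : 'rV[R]_(m + n) -> 'rV[R]_(m + n))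
  (theta : forall i : 'I_n, 'I_(p i) -> R)
  (phi : forall i : 'I_n, 'rV[R]_(m + n) -> 'I_(p i) -> R)
  (g : 'I_n -> 'rV[R]_(m + n) -> R)
  (lam : forall i : 'I_n, 'I_(q i) -> R)
  (psi : forall i : 'I_n, 'rV[R]_(m + n) -> 'I_(q i) -> R)
  (x : 'rV[R]_(m + n)) (u : 'I_n -> R) : 'rV[R]_(m + n) :=
  \row_(j < m + n)
    (f x 0 j + fu x 0 j +
     match fintype.split j with
     | inl _ => 0
     | inr i => dotv (theta i) (phi i x)
                + (g i x + dotv (lam i) (psi i x)) * u i
     end).

Definition kappa1 (R : realType) (muh nphi hx2i eps1 : R) : R :=
  muh ^+ 2 * nphi ^+ 2 / (muh * nphi * `|hx2i| + eps1).
Definition kappa2 (R : realType) (nuh npsi hx2i : R) : R :=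
  nuh * npsi * `|hx2i|.
Definition s_fun (R : realType) (u0i k1 k2 bi hx2i eps2 : R) : R :=
  u0i + k1 / bi + k2 ^+ 2 * u0i ^+ 2 / (bi * (k2 * `|hx2i| * `|u0i| + eps2)).
Definition ctrl (R : realType) (u0i muh nuh nphi npsi bi hx2i eps1 eps2 : R) : R :=
  hx2i * s_fun u0i (kappa1 muh nphi hx2i eps1) (kappa2 nuh npsi hx2i) bi hx2i eps2.

(* Main.v *)
Require Import Defs.
From HB Require Import structures.
From mathcomp Require Import all_boot all_order all_algebra.
From mathcomp Require Import all_classical all_reals all_analysis.
From mathcomp Require Import ring lra.
Import Order.TTheory GRing.Theory Num.Theory.
Import numFieldNormedType.Exports.
Local Open Scope ring_scope.
Local Open Scope classical_set_scope.

Lemma cs_sq (R : realType) (k : nat) (a b : 'I_k -> R) :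
  (\sum_(j < k) a j * b j) ^+ 2 <= (\sum_(j < k) a j ^+ 2) * (\sum_(j < k) b j ^+ 2).
Proof.
set A := \sum_(j < k) a j ^+ 2; set B := \sum_(j < k) b j ^+ 2;
set S := \sum_(j < k) a j * b j.
have key t : 0 <= t ^+ 2 * A + 2 * t * S + B.
  have -> : t ^+ 2 * A + 2 * t * S + B = \sum_(j < k) (a j * t + b j) ^+ 2.
    rewrite /A /B /S mulr_sumr mulr_sumr -!big_split /=.
    by apply: eq_bigr => j _; ring.
  by apply: sumr_ge0 => j _; rewrite sqr_ge0.
have A0 : 0 <= A by apply: sumr_ge0 => j _; rewrite sqr_ge0.
have [Ap|A0'] := ltP 0 A.
  have := key (- S / A).
  have -> : (- S / A) ^+ 2 * A + 2 * (- S / A) * S + B = B - S ^+ 2 / A.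
    by field; rewrite gt_eqF.
  rewrite subr_ge0 ler_pdivrMr // => H; by rewrite mulrC.
have Az : A = 0 by apply/eqP; rewrite eq_le A0' A0.
have aj j : a j = 0.
  have : a j ^+ 2 <= A.
    rewrite /A (bigD1 j) //= lerDl; apply: sumr_ge0 => i _; exact: sqr_ge0.
  rewrite Az => H; apply/eqP; rewrite -sqrf_eq0 eq_le H sqr_ge0 //.
have -> : S = 0 by rewrite /S big1 // => j _; rewrite aj mul0r.
by rewrite Az expr0n /= mul0r.
Qed.

Lemma cs_dot (R : realType) (k : nat) (a b : 'I_k -> R) :
  `|dotv a b| <= enorm a * enorm b.
Proof.
rewrite /dotv /enorm -sqrtrM; last by apply: sumr_ge0 => j _; rewrite sqr_ge0.
rewrite -sqrtr_sqr; rewrite ler_sqrt; first exact: cs_sq.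
by apply: mulr_ge0; apply: sumr_ge0 => j _; rewrite sqr_ge0.
Qed.

Lemma box_rad (R : realType) (k : nat) (lo hi th th0 : 'I_k -> R) :
  (forall j, lo j <= th j <= hi j) -> (forall j, lo j <= th0 j <= hi j) ->
  enorm (fun j => th j - th0 j) <= bound_rad lo hi th0.
Proof.
move=> H H0; rewrite /enorm /bound_rad ler_sqrt; last first.
  by apply: sumr_ge0 => j _; rewrite le_max sqr_ge0.
apply: ler_sum => j _; rewrite le_max; move: (H j) (H0 j) => /andP[l1 h1] /andP[l2 h2].
have [le|lt] := leP (th0 j) (th j).
  apply/orP; left; nra.
apply/orP; right; nra.
Qed.

Lemma dot_dev (R : realType) (k : nat) (lo hi th th0 : 'I_k -> R) (ph : 'I_k -> R) :
  (forall j, lo j <= th j <= hi j) -> (forall j, lo j <= th0 j <= hi j) ->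
  `|dotv th ph - dotv th0 ph| <= bound_rad lo hi th0 * enorm ph.
Proof.
move=> H H0.
have -> : dotv th ph - dotv th0 ph = dotv (fun j => th j - th0 j) ph.
  by rewrite /dotv -sumrB; apply: eq_bigr => j _; rewrite mulrBl.
have := cs_dot _ _ (fun j => th j - th0 j) ph; move=> /le_trans; apply; apply: ler_wpM2r; first by rewrite /enorm sqrtr_ge0.
exact: box_rad.
Qed.
Lemma frac_bound (R : realType) (c e : R) : 0 <= c -> 0 < e -> c - e <= c ^+ 2 / (c + e).
Proof.
move=> c0 e0; rewrite ler_pdivlMr; last lra.
nra.
Qed.

Lemma per_i (R : realType) (H a a0 P mb G G0 Q nb b u0 muh nuh gam gth glam e1 e2 : R) :
  0 < b -> b <= G -> 0 <= P -> 0 <= Q -> 0 <= muh -> 0 <= nuh -> 0 < gth -> 0 < glam ->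
  0 <= gam -> 0 < e1 -> 0 < e2 ->
  `|a - a0| <= mb * P -> `|G - G0| <= nb * Q ->
  0 <= H * a + H * (G * (H * s_fun u0 (kappa1 muh P H e1) (kappa2 nuh Q H) b H e2))
       - H * a0 - H ^+ 2 * G0 * u0 + (e1 + e2)
       + gam * (mb ^+ 2 / (2 * gth) + nb ^+ 2 / (2 * glam))
       - (muh - mb) * (- gam * muh + gth * `|H| * P) / gth
       - gam * ((muh - mb) ^+ 2 / (2 * gth))
       - (nuh - nb) * (- gam * nuh + glam * H ^+ 2 * `|u0| * Q) / glam
       - gam * ((nuh - nb) ^+ 2 / (2 * glam)).
Proof.
move=> b0 bG P0 Q0 mu0 nu0 gth0 glam0 gam0 e10 e20 ha hG.
rewrite /s_fun /kappa1 /kappa2.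
pose c1 := muh * P * `|H|.
pose c2 := nuh * Q * `|H| * `|H| * `|u0|.
have HH : H ^+ 2 = `|H| ^+ 2 by rewrite real_normK // num_real.
have UU : u0 ^+ 2 = `|u0| ^+ 2 by rewrite real_normK // num_real.
have c10 : 0 <= c1 by rewrite /c1 !mulr_ge0.
have c20 : 0 <= c2 by rewrite /c2 !mulr_ge0.
have ne : muh * P * `|H| + e1 != 0 by rewrite gt_eqF // ltr_wpDl.
have ne' : nuh * Q * `|H| * `|H| * `|u0| + e2 != 0 by rewrite gt_eqF // ltr_wpDl.
have ne2 : b != 0 by rewrite gt_eqF.
have p1 : - (`|H| * (mb * P)) <= H * a - H * a0.
  rewrite -mulrBr lerNl -mulrN; apply: le_trans (ler_norm _) _.
  by rewrite normrM ler_wpM2l // normrN.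
have p2 : - (H ^+ 2 * `|u0| * (nb * Q)) <= H ^+ 2 * (G - G0) * u0.
  rewrite lerNl -mulrN; apply: le_trans (ler_norm _) _.
  rewrite !normrM normrN -expr2 -HH mulrAC; apply: ler_wpM2l; [by rewrite mulr_ge0 ?sqr_ge0|done].
have p3 : c1 - e1 <= H ^+ 2 * G * (muh ^+ 2 * P ^+ 2 / (muh * P * `|H| + e1) / b).
  apply: (le_trans (@frac_bound R c1 e1 c10 e10)).
  have -> : c1 ^+ 2 / (c1 + e1) = H ^+ 2 * (muh ^+ 2 * P ^+ 2 / (muh * P * `|H| + e1)).
    by rewrite /c1 HH; field.
  have X0 : 0 <= muh ^+ 2 * P ^+ 2 / (muh * P * `|H| + e1).
    by apply: divr_ge0; [ rewrite mulr_ge0 ?sqr_ge0 // | rewrite addr_ge0 // ltW].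
  have Gb : 1 <= G / b by rewrite ler_pdivlMr // mul1r.
  have -> : H ^+ 2 * G * (muh ^+ 2 * P ^+ 2 / (muh * P * `|H| + e1) / b)
    = (G / b) * (H ^+ 2 * (muh ^+ 2 * P ^+ 2 / (muh * P * `|H| + e1))).
    by field; rewrite ne ne2.
  by apply: ler_peMl => //; rewrite mulr_ge0 ?sqr_ge0.
have p4 : c2 - e2 <= H ^+ 2 * G * ((nuh * Q * `|H|) ^+ 2 * u0 ^+ 2 /
               (b * (nuh * Q * `|H| * `|H| * `|u0| + e2))).
  apply: (le_trans (@frac_bound R c2 e2 c20 e20)).
  have -> : c2 ^+ 2 / (c2 + e2) = H ^+ 2 * b * ((nuh * Q * `|H|) ^+ 2 * u0 ^+ 2 /
               (b * (nuh * Q * `|H| * `|H| * `|u0| + e2))).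
    by rewrite /c2 HH UU; field; rewrite ?ne' ?ne2.
  apply: ler_wpM2r.
    apply: divr_ge0; first by rewrite mulr_ge0 ?sqr_ge0.
    by rewrite mulr_ge0 //; [lra | rewrite addr_ge0 // ltW].
  by apply: ler_wpM2l; [exact: sqr_ge0 | done].
have E : H * a + H * (G * (H * (u0 + muh ^+ 2 * P ^+ 2 / (muh * P * `|H| + e1) / b +
     (nuh * Q * `|H|) ^+ 2 * u0 ^+ 2 / (b * (nuh * Q * `|H| * `|H| * `|u0| + e2)))))
       - H * a0 - H ^+ 2 * G0 * u0 + (e1 + e2)
       + gam * (mb ^+ 2 / (2 * gth) + nb ^+ 2 / (2 * glam))
       - (muh - mb) * (- gam * muh + gth * `|H| * P) / gth
       - gam * ((muh - mb) ^+ 2 / (2 * gth))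
       - (nuh - nb) * (- gam * nuh + glam * H ^+ 2 * `|u0| * Q) / glam
       - gam * ((nuh - nb) ^+ 2 / (2 * glam))
     = (H * a - H * a0) + H ^+ 2 * (G - G0) * u0
       + H ^+ 2 * G * (muh ^+ 2 * P ^+ 2 / (muh * P * `|H| + e1) / b)
       + H ^+ 2 * G * ((nuh * Q * `|H|) ^+ 2 * u0 ^+ 2 /
               (b * (nuh * Q * `|H| * `|H| * `|u0| + e2)))
       + (e1 + e2) - (muh - mb) * `|H| * P - (nuh - nb) * H ^+ 2 * `|u0| * Q
       + gam * muh ^+ 2 / (2 * gth) + gam * nuh ^+ 2 / (2 * glam).
  by field; rewrite ne ne' ne2 !gt_eqF.
rewrite E.
have g1 : 0 <= gam * muh ^+ 2 / (2 * gth) by rewrite divr_ge0 ?mulr_ge0 ?sqr_ge0 //; lra.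
have g2 : 0 <= gam * nuh ^+ 2 / (2 * glam) by rewrite divr_ge0 ?mulr_ge0 ?sqr_ge0 //; lra.
rewrite /c1 /c2 in p3 p4.
have HH2 : `|H| * `|H| = H ^+ 2 by rewrite HH expr2.
rewrite HH in p2 p3 p4 *.
lra.
Qed.
Lemma is_derive_expl (R : realType) (gam t : R) :
  is_derive t 1 (fun s => expR (gam * s)) (expR (gam * t) * gam).
Proof.
have h1 : is_derive t 1 (fun s : R => gam * s) gam.
  suff: is_derive t 1 (fun s : R => gam * s) (gam * 1) by rewrite mulr1.
  have -> : (fun s : R => gam * s) = ( *:%R gam) by apply/funext.
  by apply: DeriveDef; [exact: derivableZ | rewrite deriveZ // derive_id].
exact: (@is_derive1_comp R expR (fun s => gam * s) t).
Qed.

Lemma expgrow (R : realType) (F : R -> R) (gam c : R) : 0 <= c ->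
  {within `[0, c], continuous F} ->
  (forall t, 0 < t < c -> derivable F t 1 /\ 0 <= 'D_1 F t + gam * F t) ->
  F 0 <= expR (gam * c) * F c.
Proof.
move=> c0 cF dF.
pose G := fun s => expR (gam * s) * F s.
have dG t : 0 < t < c -> is_derive t 1 G (expR (gam * t) * ('D_1 F t + gam * F t)).
  move=> /dF [d _].
  have := @is_deriveM R R (fun s => expR (gam * s)) F t 1 _ _ (is_derive_expl _ gam t) (derivableP d).
  move=> H; apply: is_derive_eq H _.
  by rewrite /= /GRing.scale /=; ring.
have := @ger0_derive1_le_cc R G 0 c _ _ _ 0 c.
rewrite /G mulr0 expR0 mul1r; apply => //.
- by move=> t; rewrite in_itv /= => /dG [].
- move=> t; rewrite in_itv /= => tc; rewrite derive1E.
  have := dG t tc => /@derive_val ->.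
  by rewrite mulr_ge0 ?expR_ge0 //; case: (dF t tc).
- move=> t; apply: (@continuousM R (subspace `[0, c]) (fun s => expR (gam * s)) F t); last exact: cF.
  apply: continuous_subspaceT => s.
  apply/differentiable_continuous/derivable1_diffP.
  by have [] := is_derive_expl _ gam s.
- by rewrite in_itv /= lexx.
- by rewrite in_itv /= lexx c0.
Qed.
Lemma chain (R : realType) (N : nat) (h : 'rV[R]_N -> R) (x : R -> 'rV[R]_N) (t : R) :
  differentiable h (x t) -> derivable x t 1 ->
  is_derive t 1 (h \o x) (\sum_(j < N) partial h (x t) j * ('D_1 x t) 0 j).
Proof.
move=> dh dx.
have dx' : differentiable x t by apply/derivable1_diffP.
have dc : differentiable (h \o x) t by apply: differentiable_comp.
apply: DeriveDef; first exact/derivable1_diffP.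
have E : 'd x t 1 = 'D_1 x t by rewrite deriveE.
rewrite deriveE // diff_comp //= E.
rewrite [X in 'd h (x t) X](row_sum_delta ('D_1 x t)) linear_sum /=.
apply: eq_bigr => j _; rewrite linearZ /= mulrC /partial (deriveE (f:=h)) //.
Qed.
Lemma rhs_split (R : realType) (m n : nat) (p q : 'I_n -> nat)
  (f fu : 'rV[R]_(m + n) -> 'rV[R]_(m + n))
  (theta : forall i : 'I_n, 'I_(p i) -> R)
  (phi : forall i : 'I_n, 'rV[R]_(m + n) -> 'I_(p i) -> R)
  (g : 'I_n -> 'rV[R]_(m + n) -> R)
  (lam : forall i : 'I_n, 'I_(q i) -> R)
  (psi : forall i : 'I_n, 'rV[R]_(m + n) -> 'I_(q i) -> R)
  (h : 'rV[R]_(m + n) -> R) (y : 'rV[R]_(m + n)) (u : 'I_n -> R) :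
  \sum_(j < m + n) partial h y j * (sys_rhs f fu theta phi g lam psi y u) 0 j =
  \sum_(j < m + n) partial h y j * (f y 0 j + fu y 0 j) +
  \sum_(i < n) hx2 h y i * (dotv (theta i) (phi i y) + (g i y + dotv (lam i) (psi i y)) * u i).
Proof.
rewrite /sys_rhs.
under eq_bigr => j _ do rewrite mxE mulrDr.
rewrite big_split /=; congr (_ + _).
rewrite big_split_ord /= big1 ?add0r.
  apply: eq_bigr => i _.
  have -> : fintype.split (rshift m i) = inr i := unsplitK (inr i).
  by [].
move=> j _.
have -> : fintype.split (lshift n j) = inl j := unsplitK (inl j).
by rewrite mulr0.
Qed.
Lemma cont_sum (T : topologicalType) (R : realType) (k : nat) (F : 'I_k -> T -> R) (x : T) :
  (forall i, {for x, continuous (F i)}) -> {for x, continuous (fun y => \sum_(i < k) F i y)}.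
Proof.
move=> H; rewrite -fct_sumE.
elim/big_ind: _ => //; first exact: cst_continuous.
by move=> f1 f2 c1 c2; apply: continuousD.
Qed.

Lemma cont_sq (T : topologicalType) (R : realType) (F : T -> R) (c d : R) (x : T) :
  {for x, continuous F} -> {for x, continuous (fun y => (F y - c) ^+ 2 / d)}.
Proof.
move=> H.
have HB : {for x, continuous (fun y => F y - c)}.
  by apply: (@continuousB _ _ _ F (fun=> c)) => //; exact: cst_continuous.
apply: (@continuousM R T (fun y => (F y - c) ^+ 2) (fun=> d^-1)); last exact: cst_continuous.
by apply: (@continuousM R T (fun y => F y - c) (fun y => F y - c)).
Qed.

Lemma der_sq (R : realType) (F : R -> R) (c d s dF : R) :
  is_derive s 1 F dF -> is_derive s 1 (fun y => (F y - c) ^+ 2 / d) (2 * (F s - c) * dF / d).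
Proof.
move=> H.
have H1 : is_derive s 1 (F - cst c) (dF - 0) by apply: is_deriveB.
have H2 := @is_deriveM R R (F - cst c) (F - cst c) s 1 _ _ H1 H1.
have H3 := @is_deriveM R R ((F - cst c) * (F - cst c)) (cst (d^-1)) s 1 _ _ H2 (is_derive_cst _ _ _).
have -> : (fun y => (F y - c) ^+ 2 / d) = ((F - cst c) * (F - cst c)) * cst (d^-1).
  by apply/funext => y /=; rewrite expr2.
apply: is_derive_eq H3 _.
have E : (F - cst c) s = F s - c by []. rewrite /= /GRing.scale /= E; ring.
Qed.

Lemma der_sum (R : realType) (k : nat) (F : 'I_k -> R -> R) (dF : 'I_k -> R) (s : R) :
  (forall i, is_derive s 1 (F i) (dF i)) ->
  is_derive s 1 (fun y => \sum_(i < k) F i y) (\sum_(i < k) dF i).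
Proof. by move=> H; rewrite -fct_sumE; apply: is_derive_sum. Qed.
Lemma within_pos (R : realType) (F : R -> R) (t0 : R) : 0 <= t0 ->
  {within `[0, +oo[, continuous F} -> 0 < F t0 ->
  exists2 d, 0 < d & forall s, 0 <= s -> `|s - t0| < d -> 0 < F s.
Proof.
move=> t00 cF Ft0.
have := cvgr_gt (F t0) (cF t0) 0 Ft0.
have At0 : [set` `[0, +oo[%R] t0 by rewrite /= in_itv /= t00.
move=> /(_ (nbhs_filter (t0 : subspace `[0, +oo[))). case: (@nbhs_subspaceP R [set` `[0, +oo[%R] t0) => // _. rewrite /within /= => /nbhs_normP [e e0 He].
exists e => // s s0 st; apply: He.
  by rewrite /ball_ /= distrC.
first [ by rewrite in_itv /= s0 | by rewrite inE /= s0 | by rewrite itv_boundlr /= s0 | by rewrite in_itv_Oy s0 | by rewrite /= s0 | by case: s0 ].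
Qed.

Theorem theorem1 (R : realType) (m n : nat) (p q : 'I_n -> nat)
  (f fu fulo fuhi : 'rV[R]_(m + n) -> 'rV[R]_(m + n))
  (theta theta0 thlo thhi : forall i : 'I_n, 'I_(p i) -> R)
  (lam lam0 lamlo lamhi : forall i : 'I_n, 'I_(q i) -> R)
  (phi : forall i : 'I_n, 'rV[R]_(m + n) -> 'I_(p i) -> R)
  (psi : forall i : 'I_n, 'rV[R]_(m + n) -> 'I_(q i) -> R)
  (g : 'I_n -> 'rV[R]_(m + n) -> R)
  (h : 'rV[R]_(m + n) -> R)
  (b : 'I_n -> R)
  (gamma eps1 eps2 : R) (gth glam : 'I_n -> R)
  (u0 : 'rV[R]_(m + n) -> 'rV[R]_n)
  (x : R -> 'rV[R]_(m + n)) (muh nuh : 'I_n -> R -> R) :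
  (* standing regularity assumptions *)
  (0 < n)%N ->
  lipschitz f -> lipschitz fu ->
  (forall y, differentiable h y) ->
  (forall j, continuous (fun y => partial h y j)) ->
  (* Assumption A *)
  (forall y j, fulo y 0 j <= fu y 0 j <= fuhi y 0 j) ->
  (* Assumption B, and nominal values inside the boxes *)
  (forall i j, thlo i j <= theta i j <= thhi i j) ->
  (forall i j, lamlo i j <= lam i j <= lamhi i j) ->
  (forall i j, thlo i j <= theta0 i j <= thhi i j) ->
  (forall i j, lamlo i j <= lam0 i j <= lamhi i j) ->
  (* Assumption C *)
  (forall i, 0 < b i) ->
  (forall i y, 0 <= h y -> b i <= g i y + dotv (lam i) (psi i y)) ->
  (* (ii) positive constants and non-emptiness of K_BF(x) on C *)
  0 < gamma -> 0 < eps1 -> 0 < eps2 ->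
  (forall i, 0 < gth i) -> (forall i, 0 < glam i) ->
  let mubar i := bound_rad (thlo i) (thhi i) (theta0 i) in
  let nubar i := bound_rad (lamlo i) (lamhi i) (lam0 i) in
  let Psi0 y :=
    Mfun h f fulo fuhi y
    + \sum_(i < n) hx2 h y i * dotv (theta0 i) (phi i y)
    - n%:R * (eps1 + eps2)
    + gamma * (h y - \sum_(i < n) (mubar i ^+ 2 / (2 * gth i)
                                   + nubar i ^+ 2 / (2 * glam i))) in
  let Psi1u y (v : 'I_n -> R) :=
    \sum_(i < n) hx2 h y i ^+ 2 * (g i y + dotv (lam0 i) (psi i y)) * v i in
  (forall y, 0 <= h y -> exists v : 'I_n -> R, 0 <= Psi0 y + Psi1u y v) ->
  (* (iii) u0 Lipschitz with u0(x) in K_BF(x) on C *)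
  lipschitz u0 ->
  (forall y, 0 <= h y -> 0 <= Psi0 y + Psi1u y (fun i => u0 y 0 i)) ->
  (* closed-loop trajectory on [0, +oo) *)
  let u t i := ctrl (u0 (x t) 0 i) (muh i t) (nuh i t)
                    (enorm (phi i (x t))) (enorm (psi i (x t)))
                    (b i) (hx2 h (x t) i) eps1 eps2 in
  {within `[0, +oo[, continuous x} ->
  (forall i, {within `[0, +oo[, continuous (muh i)}) ->
  (forall i, {within `[0, +oo[, continuous (nuh i)}) ->
  (forall t, 0 < t -> derivable x t 1 /\
     'D_1 x t = sys_rhs f fu theta phi g lam psi (x t) (u t)) ->
  (forall i t, 0 < t -> derivable (muh i) t 1 /\
     'D_1 (muh i) t = - gamma * muh i t
                      + gth i * `|hx2 h (x t) i| * enorm (phi i (x t))) ->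
  (forall i t, 0 < t -> derivable (nuh i) t 1 /\
     'D_1 (nuh i) t = - gamma * nuh i t
                      + glam i * hx2 h (x t) i ^+ 2 * `|u0 (x t) 0 i|
                        * enorm (psi i (x t))) ->
  (forall i, 0 < muh i 0) -> (forall i, 0 < nuh i 0) ->
  (* (iv) initial condition *)
  \sum_(i < n) ((muh i 0 ^+ 2 + mubar i ^+ 2) / (2 * gth i)
               + (nuh i 0 ^+ 2 + nubar i ^+ 2) / (2 * glam i)) <= h (x 0) ->
  forall t, 0 < t -> 0 <= h (x t).
Proof.
move=> n0 Lf Lfu dh cpart hA hB1 hB2 hB3 hB4 bpos hC gam0 e10 e20 gth0 glam0
  mubar nubar Psi0 Psi1u hK Lu0 hu0 u xc muc nuc dx dmu dnu mu0 nu0 hinit.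
have sub0 (r : R) : [set` `[0, r]%R] `<=` [set` `[0, +oo[%R].
  move=> s; rewrite /= !in_itv /= => /andP[s0 _].
  first [ by rewrite s0 | by rewrite in_itv /= s0 ].
have enorm0 k (v : 'I_k -> R) : 0 <= enorm v by rewrite /enorm sqrtr_ge0.
have mupos i r : 0 <= r -> 0 < muh i r.
  move=> r0.
  have H := @expgrow R (muh i) gamma r r0 (continuous_subspaceW (sub0 r) (muc i)).
  have : muh i 0 <= expR (gamma * r) * muh i r.
    apply: H => s /andP[s0 sr]; have [d ->] := dmu i s s0; split => //.
    have -> : forall a c : R, - gamma * a + c + gamma * a = c by move=> a c; ring.
    by rewrite !mulr_ge0 ?normr_ge0 ?enorm0 // ltW.
  move=> /(lt_le_trans (mu0 i)); by rewrite pmulr_rgt0 // expR_gt0.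
have nupos i r : 0 <= r -> 0 < nuh i r.
  move=> r0.
  have H := @expgrow R (nuh i) gamma r r0 (continuous_subspaceW (sub0 r) (nuc i)).
  have : nuh i 0 <= expR (gamma * r) * nuh i r.
    apply: H => s /andP[s0 sr]; have [d ->] := dnu i s s0; split => //.
    have -> : forall a c : R, - gamma * a + c + gamma * a = c by move=> a c; ring.
    apply: mulr_ge0; last exact: enorm0.
    by apply: mulr_ge0 => //; apply: mulr_ge0; [exact: ltW | exact: sqr_ge0].
  move=> /(lt_le_trans (nu0 i)); by rewrite pmulr_rgt0 // expR_gt0.
have hxc : {within `[0, +oo[, continuous (fun s => h (x s))}.
  move=> r; apply: (continuous_comp (xc r)).
  exact/differentiable_continuous/dh.
pose T0 s := \sum_(i < n) ((muh i s - mubar i) ^+ 2 / (2 * gth i)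
                          + (nuh i s - nubar i) ^+ 2 / (2 * glam i)).
pose V s := h (x s) - T0 s.
have Vc : {within `[0, +oo[, continuous V}.
  move=> r.
  have Tc : {for r, continuous (T0 : subspace [set` `[0, +oo[%R] -> R)}.
    apply: cont_sum => i.
    exact (continuousD (cont_sq _ _ (from_subspace [set` `[0, +oo[%R] (muh i)) (mubar i) (2 * gth i) r (muc i r))
                        (cont_sq _ _ (from_subspace [set` `[0, +oo[%R] (nuh i)) (nubar i) (2 * glam i) r (nuc i r))).
  exact: (continuousB (hxc r) Tc).
have Vd s : 0 < s -> 0 <= h (x s) -> derivable V s 1 /\ 0 <= 'D_1 V s + gamma * V s.
  move=> s0 hs.
  have [dxs Dxs] := dx s s0.
  set y := x s.
  have Hh := chain _ _ h x s (dh y) dxs.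
  pose dmuv i := - gamma * muh i s + gth i * `|hx2 h y i| * enorm (phi i y).
  pose dnuv i := - gamma * nuh i s + glam i * hx2 h y i ^+ 2 * `|u0 y 0 i| * enorm (psi i y).
  have Hmu i : is_derive s 1 (muh i) (dmuv i).
    by have [d e] := dmu i s s0; rewrite /dmuv -e; apply: derivableP.
  have Hnu i : is_derive s 1 (nuh i) (dnuv i).
    by have [d e] := dnu i s s0; rewrite /dnuv -e; apply: derivableP.
  pose td i := 2 * (muh i s - mubar i) * dmuv i / (2 * gth i)
             + 2 * (nuh i s - nubar i) * dnuv i / (2 * glam i).
  have HT : is_derive s 1 T0 (\sum_(i < n) td i).
    apply: der_sum => i.
    exact: is_deriveD (der_sq _ _ _ _ _ _ (Hmu i)) (der_sq _ _ _ _ _ _ (Hnu i)).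
  have HV : is_derive s 1 V ((\sum_(j < m + n) partial h y j * ('D_1 x s) 0 j) - \sum_(i < n) td i).
    exact: is_deriveB Hh HT.
  split; first by case: HV.
  move: (HV) => /@derive_val ->.
  rewrite Dxs rhs_split.
  have hK0 := hu0 y hs; rewrite /Psi0 /Psi1u /= in hK0.
  have hM : Mfun h f fulo fuhi y <= \sum_(j < m + n) partial h y j * (f y 0 j + fu y 0 j).
    rewrite /Mfun -big_split /=; apply: ler_sum => j _; rewrite mulrDr lerD2l.
    have /andP[l1 l2] := hA y j.
    have [pp|pn] := leP 0 (partial h y j).
      by rewrite ge_min; apply/orP; left; exact: ler_wpM2l.
    by rewrite ge_min; apply/orP; right; apply: ler_wnM2l => //; exact: ltW.
  pose D i := hx2 h y i * dotv (theta i) (phi i y)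
     + hx2 h y i * ((g i y + dotv (lam i) (psi i y)) * (hx2 h y i *
         s_fun (u0 y 0 i) (kappa1 (muh i s) (enorm (phi i y)) (hx2 h y i) eps1)
           (kappa2 (nuh i s) (enorm (psi i y)) (hx2 h y i)) (b i) (hx2 h y i) eps2))
     - hx2 h y i * dotv (theta0 i) (phi i y)
     - hx2 h y i ^+ 2 * (g i y + dotv (lam0 i) (psi i y)) * u0 y 0 i + (eps1 + eps2)
     + gamma * (mubar i ^+ 2 / (2 * gth i) + nubar i ^+ 2 / (2 * glam i))
     - (muh i s - mubar i) * (- gamma * muh i s + gth i * `|hx2 h y i| * enorm (phi i y)) / gth i
     - gamma * ((muh i s - mubar i) ^+ 2 / (2 * gth i))
     - (nuh i s - nubar i) * (- gamma * nuh i s + glam i * hx2 h y i ^+ 2 * `|u0 y 0 i| * enorm (psi i y)) / glam i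
     - gamma * ((nuh i s - nubar i) ^+ 2 / (2 * glam i)).
  have hD : 0 <= \sum_(i < n) D i.
    apply: sumr_ge0 => i _; rewrite /D.
    apply: per_i => //.
    - exact: hC.
    - exact/ltW/mupos/ltW.
    - exact/ltW/nupos/ltW.
    - exact: ltW.
    - exact: dot_dev.
    - have -> : g i y + dotv (lam i) (psi i y) - (g i y + dotv (lam0 i) (psi i y))
                = dotv (lam i) (psi i y) - dotv (lam0 i) (psi i y) by ring.
      exact: dot_dev.
  have E : \sum_(i < n) D i =
     \sum_(i < n) hx2 h y i * (dotv (theta i) (phi i y) + (g i y + dotv (lam i) (psi i y)) * u s i)
     - \sum_(i < n) td i
     - gamma * T0 s
     - \sum_(i < n) hx2 h y i * dotv (theta0 i) (phi i y)
     + n%:R * (eps1 + eps2)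
     + gamma * \sum_(i < n) (mubar i ^+ 2 / (2 * gth i) + nubar i ^+ 2 / (2 * glam i))
     - \sum_(i < n) hx2 h y i ^+ 2 * (g i y + dotv (lam0 i) (psi i y)) * u0 y 0 i.
    have Ce : n%:R * (eps1 + eps2) = \sum_(i < n) (eps1 + eps2).
      by rewrite sumr_const card_ord mulr_natl.
    rewrite Ce /T0 !mulr_sumr.
    have E2 : \sum_(i < n) D i = \sum_(i < n)
       (hx2 h y i * (dotv (theta i) (phi i y) + (g i y + dotv (lam i) (psi i y)) * u s i)
        - td i
        - gamma * ((muh i s - mubar i) ^+ 2 / (2 * gth i) + (nuh i s - nubar i) ^+ 2 / (2 * glam i))
        - hx2 h y i * dotv (theta0 i) (phi i y)
        + (eps1 + eps2)
        + gamma * (mubar i ^+ 2 / (2 * gth i) + nubar i ^+ 2 / (2 * glam i))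
        - hx2 h y i ^+ 2 * (g i y + dotv (lam0 i) (psi i y)) * u0 y 0 i).
      apply: eq_bigr => i _; rewrite /D /td /dmuv /dnuv /u /ctrl /y.
      by field; rewrite !gt_eqF.
    by rewrite E2 !(sumrB, big_split).
  rewrite /V -/y.
  move: hK0 hM hD E; set A1 := \sum_(j < m + n) _; set M1 := Mfun _ _ _ _ _.
  lra.
have Vmono c : 0 <= c -> (forall s, 0 < s < c -> 0 <= h (x s)) ->
    V 0 <= expR (gamma * c) * V c.
  move=> c0 hpos; apply: expgrow => //; first exact: continuous_subspaceW (sub0 c) Vc.
  move=> s /andP[s0 sc]; apply: Vd => //; apply: hpos; by rewrite s0 sc.
pose ci i := muh i 0 * mubar i / gth i + nuh i 0 * nubar i / glam i.
have V0 : \sum_(i < n) ci i <= V 0.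
  have E : \sum_(i < n) (ci i + ((muh i 0 - mubar i) ^+ 2 / (2 * gth i)
                          + (nuh i 0 - nubar i) ^+ 2 / (2 * glam i)))
         = \sum_(i < n) ((muh i 0 ^+ 2 + mubar i ^+ 2) / (2 * gth i)
               + (nuh i 0 ^+ 2 + nubar i ^+ 2) / (2 * glam i)).
    apply: eq_bigr => i _; rewrite /ci; field.
    by rewrite !gt_eqF.
  rewrite big_split /= in E.
  rewrite /V /T0; lra.
have mb0 i : 0 <= mubar i by rewrite /mubar /bound_rad sqrtr_ge0.
have nb0 i : 0 <= nubar i by rewrite /nubar /bound_rad sqrtr_ge0.
move=> t tpos; rewrite leNgt; apply/negP => ht.
pose Z := [set s : R | (0 <= s) && (s <= t) && (h (x s) <= 0)].
have Zt : Z t by rewrite /Z /= (ltW tpos) lexx (ltW ht).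
have Zlb : lbound Z 0 by move=> s; rewrite /Z /= => /andP[/andP[]].
have hlb : has_lbound Z by exists 0.
have hne : Z !=set0 by exists t.
have hasinf : has_inf Z by split.
pose ts := inf Z.
have ts0 : 0 <= ts by apply: lb_le_inf.
have tst : ts <= t by apply: ge_inf.
have hpos s : 0 <= s -> s < ts -> 0 < h (x s).
  move=> s0 sts; rewrite ltNge; apply/negP => hs.
  have Zs : Z s by rewrite /Z /= s0 hs (le_trans (ltW sts) tst).
  by have := ge_inf hlb Zs; rewrite leNgt sts.
have hts : h (x ts) <= 0.
  rewrite leNgt; apply/negP => hts.
  have [d d0 Hd] := within_pos _ (fun s => h (x s)) ts ts0 hxc hts.
  have [z Zz zd] := inf_adherent d0 hasinf.
  have tz : ts <= z := ge_inf hlb Zz.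
  move: (Zz); rewrite /Z /= => /andP[/andP[z0 _] hz].
  have : 0 < h (x z).
    apply: Hd => //; rewrite ger0_norm ?subr_ge0 //; lra.
  lra.
have := Vmono ts ts0 (fun s hs => ltW (hpos s (ltW (proj1 (andP hs))) (proj2 (andP hs)))).
have Ep : 0 < expR (gamma * ts) := expR_gt0 _.
set E := expR (gamma * ts).
have key : 0 < \sum_(i < n) (ci i + E * ((muh i ts - mubar i) ^+ 2 / (2 * gth i)
                          + (nuh i ts - nubar i) ^+ 2 / (2 * glam i))).
  have term i : 0 < ci i + E * ((muh i ts - mubar i) ^+ 2 / (2 * gth i)
                          + (nuh i ts - nubar i) ^+ 2 / (2 * glam i)).
    have m0 := mu0 i; have n00 := nu0 i; have mts := mupos i ts ts0.
    have g1 := gth0 i; have g2 := glam0 i.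
    have c1 : 0 <= muh i 0 * mubar i / gth i by rewrite divr_ge0 ?mulr_ge0 // ltW.
    have c2 : 0 <= nuh i 0 * nubar i / glam i by rewrite divr_ge0 ?mulr_ge0 // ltW.
    have t1 : 0 <= (muh i ts - mubar i) ^+ 2 / (2 * gth i) by rewrite divr_ge0 ?sqr_ge0 //; lra.
    have t2 : 0 <= (nuh i ts - nubar i) ^+ 2 / (2 * glam i) by rewrite divr_ge0 ?sqr_ge0 //; lra.
    have [mbp|mbz] := ltP 0 (mubar i).
      have : 0 < muh i 0 * mubar i / gth i by rewrite divr_gt0 ?mulr_gt0.
      rewrite /ci => c1'.
      have : 0 <= E * ((muh i ts - mubar i) ^+ 2 / (2 * gth i)
                          + (nuh i ts - nubar i) ^+ 2 / (2 * glam i)).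
        by rewrite mulr_ge0 ?addr_ge0 // ltW.
      lra.
    have mbe : mubar i = 0 by apply/eqP; rewrite eq_le mbz mb0.
    have : 0 < (muh i ts - mubar i) ^+ 2 / (2 * gth i).
      by rewrite mbe subr0 divr_gt0 ?exprn_gt0 ?mulr_gt0.
    move=> t1'.
    have : 0 < E * ((muh i ts - mubar i) ^+ 2 / (2 * gth i)
                          + (nuh i ts - nubar i) ^+ 2 / (2 * glam i)).
      by rewrite mulr_gt0 // ltr_wpDr.
    rewrite /ci; lra.
  rewrite (bigD1 (Ordinal n0)) //=.
  apply: ltr_wpDr; last exact: term.
  by apply: sumr_ge0 => i _; apply: ltW.
rewrite big_split /= -mulr_sumr in key.
have := V0.
rewrite /V /T0 => V0' VV.
have Eh : E * h (x ts) <= 0 by rewrite pmulr_rle0.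
lra.
Qed.
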